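(* A $*$-category is a pre-Hilbert $*$-category if and only if (H1) there is a zero object, (H2) every pair of objects has an orthonormal biproduct, (H3) every parallel pair of morphisms has an isometric equaliser, and (H4) every isometry is a normal monomorphism.
   Context: A $*$-category is a category with a choice of $f^*\colon Y\to X$ for each $f\colon X\to Y$ such that $1^*=1$, $(gf)^*=f^*g^*$, $(f^* )^*=f$; $f$ is an isometry if $f^*f=1$. An isometric equaliser is an equaliser that is an isometry; a kernel of $f$ is an equaliser of $f$ and the zero morphism; a normal monomorphism is a kernel of some morphism. An orthonormal biproduct is a biproduct $(X,s_1,r_1,s_2,r_2)$ with $r_k=s_k^*$. A pre-Hilbert $*$-category is a $*$-category in which (R1) there is a zero object, (R2) every pair of objects has an orthonormal biproduct, (R3) every morphism has an isometric kernel, and (R4) every diagonal $\Delta\colon X\to X\oplus X$ is a normal monomorphism. *)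

(* Defs.v *)
Set Implicit Arguments.
Unset Strict Implicit.

Record Category := {
  Ob :> Type;
  Hom : Ob -> Ob -> Type;
  idm : forall X : Ob, Hom X X;
  comp : forall X Y Z : Ob, Hom Y Z -> Hom X Y -> Hom X Z;
  comp_assoc : forall (W X Y Z : Ob) (h : Hom Y Z) (g : Hom X Y) (f : Hom W X),
      comp h (comp g f) = comp (comp h g) f;
  comp_id_l : forall (X Y : Ob) (f : Hom X Y), comp (idm Y) f = f;
  comp_id_r : forall (X Y : Ob) (f : Hom X Y), comp f (idm X) = f
}.

Arguments Hom {c} X Y.
Arguments idm {c} X.
Arguments comp {c X Y Z} g f.

Record StarCategory := {
  cat :> Category;
  star : forall X Y : cat, Hom X Y -> Hom Y X;
  star_id : forall X : cat, star (idm X) = idm X;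
  star_comp : forall (X Y Z : cat) (g : Hom Y Z) (f : Hom X Y),
      star (comp g f) = comp (star f) (star g);
  star_invol : forall (X Y : cat) (f : Hom X Y), star (star f) = f
}.

Arguments star {s X Y} f.

Section Defs.
Variable C : StarCategory.

Definition isometry {X Y : C} (f : Hom X Y) : Prop :=
  comp (star f) f = idm X.

Definition is_zero_object (Z : C) : Prop :=
  (forall X : C, exists f : Hom X Z, forall g : Hom X Z, g = f) /\
  (forall X : C, exists f : Hom Z X, forall g : Hom Z X, g = f).

Definition is_zero_mor {X Y : C} (f : Hom X Y) : Prop :=
  exists (Z : C) (a : Hom X Z) (b : Hom Z Y), is_zero_object Z /\ f = comp b a.

Definition is_equaliser {E X Y : C} (e : Hom E X) (f g : Hom X Y) : Prop :=
  comp f e = comp g e /\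
  forall (W : C) (h : Hom W X), comp f h = comp g h ->
    exists u : Hom W E, comp e u = h /\
      forall u' : Hom W E, comp e u' = h -> u' = u.

Definition is_isometric_equaliser {E X Y : C} (e : Hom E X) (f g : Hom X Y)
  : Prop := is_equaliser e f g /\ isometry e.

Definition is_kernel {K X Y : C} (k : Hom K X) (f : Hom X Y) : Prop :=
  exists z : Hom X Y, is_zero_mor z /\ is_equaliser k f z.

Definition normal_mono {K X : C} (m : Hom K X) : Prop :=
  exists (Y : C) (f : Hom X Y), is_kernel m f.

Definition is_product {P A B : C} (p1 : Hom P A) (p2 : Hom P B) : Prop :=
  forall (W : C) (f1 : Hom W A) (f2 : Hom W B),
    exists u : Hom W P, (comp p1 u = f1 /\ comp p2 u = f2) /\
      forall u' : Hom W P, comp p1 u' = f1 -> comp p2 u' = f2 -> u' = u.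

Definition is_coproduct {P A B : C} (i1 : Hom A P) (i2 : Hom B P) : Prop :=
  forall (W : C) (f1 : Hom A W) (f2 : Hom B W),
    exists u : Hom P W, (comp u i1 = f1 /\ comp u i2 = f2) /\
      forall u' : Hom P W, comp u' i1 = f1 -> comp u' i2 = f2 -> u' = u.

Definition is_biproduct {A1 A2 X : C} (s1 : Hom A1 X) (r1 : Hom X A1)
    (s2 : Hom A2 X) (r2 : Hom X A2) : Prop :=
  is_product r1 r2 /\ is_coproduct s1 s2 /\
  comp r1 s1 = idm A1 /\ comp r2 s2 = idm A2 /\
  is_zero_mor (comp r2 s1) /\ is_zero_mor (comp r1 s2).

Definition is_orthonormal_biproduct {A1 A2 X : C} (s1 : Hom A1 X)
    (r1 : Hom X A1) (s2 : Hom A2 X) (r2 : Hom X A2) : Prop :=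
  is_biproduct s1 r1 s2 r2 /\ r1 = star s1 /\ r2 = star s2.

Definition has_zero_object : Prop := exists Z : C, is_zero_object Z.

Definition has_orthonormal_biproducts : Prop :=
  forall A1 A2 : C, exists (X : C) (s1 : Hom A1 X) (r1 : Hom X A1)
    (s2 : Hom A2 X) (r2 : Hom X A2), is_orthonormal_biproduct s1 r1 s2 r2.

Definition has_isometric_kernels : Prop :=
  forall (X Y : C) (f : Hom X Y), exists (K : C) (k : Hom K X),
    is_kernel k f /\ isometry k.

Definition diagonals_normal : Prop :=
  forall (X P : C) (s1 s2 : Hom X P),
    is_orthonormal_biproduct s1 (star s1) s2 (star s2) ->
    forall d : Hom X P, comp (star s1) d = idm X -> comp (star s2) d = idm X ->
      normal_mono d.

Definition has_isometric_equalisers : Prop :=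
  forall (X Y : C) (f g : Hom X Y), exists (E : C) (e : Hom E X),
    is_isometric_equaliser e f g.

Definition isometries_normal : Prop :=
  forall (X Y : C) (f : Hom X Y), isometry f -> normal_mono f.

Definition pre_Hilbert : Prop :=
  has_zero_object /\ has_orthonormal_biproducts /\
  has_isometric_kernels /\ diagonals_normal.

End Defs.

(* Main.v *)
Require Import Defs.

Section S.
Variable C : StarCategory.

Lemma zero_unique {X Y : C} (f g : Hom X Y) :
  is_zero_mor f -> is_zero_mor g -> f = g.
Proof.
  intros (Z & a & b & [HZt HZi] & ->) (Z' & a' & b' & [HZt' HZi'] & ->).
  destruct (HZi Z') as [i Hi].
  destruct (HZt' X) as [t Ht].
  destruct (HZi Y) as [t2 Ht2].
  assert (E1 : a' = comp i a) by (rewrite (Ht a'), (Ht (comp i a)); reflexivity).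
  assert (E2 : b = comp b' i) by (rewrite (Ht2 b), (Ht2 (comp b' i)); reflexivity).
  rewrite E1, E2, comp_assoc. reflexivity.
Qed.

Lemma zero_comp_r {X Y W : C} (f : Hom X Y) (h : Hom W X) :
  is_zero_mor f -> is_zero_mor (comp f h).
Proof.
  intros (Z & a & b & HZ & ->). exists Z, (comp a h), b. split; auto.
  rewrite comp_assoc; reflexivity.
Qed.

Lemma zero_comp_l {X Y W : C} (f : Hom X Y) (h : Hom Y W) :
  is_zero_mor f -> is_zero_mor (comp h f).
Proof.
  intros (Z & a & b & HZ & ->). exists Z, a, (comp h b). split; auto.
  rewrite comp_assoc; reflexivity.
Qed.

Lemma prod_ext {P A B W : C} (r1 : Hom P A) (r2 : Hom P B) (x y : Hom W P) :
  is_product r1 r2 -> comp r1 x = comp r1 y -> comp r2 x = comp r2 y -> x = y.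
Proof.
  intros H H1 H2. destruct (H W (comp r1 x) (comp r2 x)) as [u [_ Hu]].
  rewrite (Hu x eq_refl eq_refl), (Hu y (eq_sym H1) (eq_sym H2)). reflexivity.
Qed.

Lemma eq_transfer {E E' X Y Y' : C} (e : Hom E X) (e' : Hom E' X)
  (a b : Hom X Y) (c z : Hom X Y') :
  is_equaliser e a b -> is_equaliser e' a b -> is_equaliser e' c z ->
  is_equaliser e c z.
Proof.
  intros [He1 He2] [He1' He2'] [Hc1 Hc2].
  destruct (He2' _ e He1) as [phi [Hphi _]].
  split.
  - rewrite <- Hphi, !comp_assoc, Hc1. reflexivity.
  - intros W w Hw. destruct (Hc2 W w Hw) as [u [Hu _]]. apply He2.
    rewrite <- Hu, !comp_assoc, He1'. reflexivity.
Qed.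

Lemma diag_equaliser {X P : C} (r1 r2 : Hom P X) (d : Hom X P) :
  is_product r1 r2 -> comp r1 d = idm X -> comp r2 d = idm X ->
  is_equaliser d r1 r2.
Proof.
  intros Hp H1 H2. split.
  - rewrite H1, H2; reflexivity.
  - intros W h Hh. exists (comp r1 h). split.
    + apply (prod_ext r1 r2 _ _ Hp).
      * rewrite comp_assoc, H1, comp_id_l. reflexivity.
      * rewrite comp_assoc, H2, comp_id_l. auto.
    + intros u' <-. rewrite comp_assoc, H1, comp_id_l. reflexivity.
Qed.

Lemma H3lemma : pre_Hilbert C -> forall (X Y : C) (f g : Hom X Y),
  exists (K : C) (k : Hom K X) (Q : C) (m : Hom X Q),
    isometry k /\ is_kernel k m /\ is_equaliser k f g.
Proof.
  intros (H0 & Hb & Hker & Hdiag) X Y f g.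
  destruct (Hb Y Y) as (P & s1 & r1 & s2 & r2 & Hbi).
  pose proof Hbi as [[Hprod _] [-> ->]].
  destruct (Hprod Y (idm Y) (idm Y)) as [d [[Hd1 Hd2] _]].
  destruct (Hdiag Y P s1 s2 Hbi d Hd1 Hd2) as (Q & q & z' & Hz' & [Hd3 Hd4]).
  destruct (Hprod X f g) as [h [[Hh1 Hh2] _]].
  destruct (Hker X Q (comp q h)) as (K & k & (z1 & Hz1 & [Hk1 Hk2]) & Hiso).
  exists K, k, Q, (comp q h). split; [exact Hiso | split].
  - exists z1; split; auto. split; auto.
  - assert (Hqk : comp q (comp h k) = comp z' (comp h k)).
    { rewrite comp_assoc, Hk1. apply zero_unique.
      - apply zero_comp_r; auto.
      - apply zero_comp_r; auto. }
    destruct (Hd4 K (comp h k) Hqk) as [u [Hu _]].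
    split.
    + assert (comp f k = u) as ->.
      { rewrite <- Hh1, <- comp_assoc, <- Hu, comp_assoc, Hd1, comp_id_l. reflexivity. }
      rewrite <- Hh2, <- comp_assoc, <- Hu, comp_assoc, Hd2, comp_id_l. reflexivity.
    + intros W w Hw. apply Hk2.
      assert (Hhw : comp h w = comp d (comp f w)).
      { apply (prod_ext (star s1) (star s2) _ _ Hprod).
        - rewrite !comp_assoc, Hh1, Hd1, comp_id_l. reflexivity.
        - rewrite !comp_assoc, Hh2, Hd2, comp_id_l. auto. }
      rewrite <- comp_assoc, Hhw, comp_assoc, Hd3. apply zero_unique.
      * apply zero_comp_r, zero_comp_r; auto.
      * apply zero_comp_r; auto.
Qed.

End S.

Theorem proposition3p5 (C : StarCategory) :
  pre_Hilbert C <->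
  (has_zero_object C /\ has_orthonormal_biproducts C /\
   has_isometric_equalisers C /\ isometries_normal C).
Proof.
  split.
  - intros HH. pose proof HH as (H0 & Hb & Hk & Hd).
    split; [exact H0 | split; [exact Hb | split]].
    + intros X Y f g. destruct (@H3lemma C HH _ _ f g) as (K&k&Q&m&Hi&_&He).
      exists K, k. split; auto.
    + intros X Y f Hf. unfold isometry in Hf.
      destruct (@H3lemma C HH _ _ (idm Y) (comp f (star f))) as (K&k&Q&m&Hi&(z&Hz&Hke)&He).
      exists Q, m, z. split; auto.
      eapply eq_transfer; [ | exact He | exact Hke ].
      split.
      * rewrite comp_id_l, <- comp_assoc, Hf, comp_id_r. reflexivity.
      * intros W w Hw. exists (comp (star f) w). split.
        -- rewrite comp_assoc, <- Hw, comp_id_l. reflexivity.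
        -- intros u' <-. rewrite comp_assoc, Hf, comp_id_l. reflexivity.
  - intros (H0 & Hb & He & Hn). split; [exact H0 | split; [exact Hb | split]].
    + intros X Y f. destruct H0 as [Z [Ht Hi]].
      destruct (Ht X) as [a _]. destruct (Hi Y) as [b _].
      destruct (He X Y f (comp b a)) as (E&e&Heq&Hiso).
      exists E, e. split; auto. exists (comp b a); split; auto.
      exists Z, a, b; split; [split; auto | reflexivity].
    + intros X P s1 s2 Hbi d Hd1 Hd2.
      destruct (He P X (star s1) (star s2)) as (E&e&Heq&Hiso).
      destruct (Hn _ _ e Hiso) as (Q&m&z&Hz&Hem).
      exists Q, m, z. split; auto.
      destruct Hbi as [[Hprod _] _].
      eapply eq_transfer; [ apply diag_equaliser; eauto | exact Heq | exact Hem ].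
Qed.
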